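(* The number of integers $N$ with $2^{i-1}\le N<2^i$ for which there exist antipalindromic numbers $A,B$ with $N=A/B$ is $\Omega(\sqrt{2}^{\,i})$ as $i\to\infty$.
   Context: A positive integer $n$ is antipalindromic if its binary representation $w=w_1\cdots w_L$ (most significant digit first, no leading zeros) has even length $L$ and satisfies $w_i+w_{L+1-i}=1$ for all $i$ (the second half is the reverse complement of the first half). *)

(* Defs.v *)
From Stdlib Require Import Arith Reals List.

Definition bin_len (n : nat) : nat := S (Nat.log2 n).

(* n is antipalindromic: n > 0, its binary word w_1..w_L (MSB first) has even
   length L and w_i + w_{L+1-i} = 1 for all i.  Digit w_i (1-based, MSB first)
   is bit number L-i (0-based, LSB first), i.e. Nat.testbit n (L-i). *)
Definition antipalindromic (n : nat) : Prop :=
  0 < n /\ Nat.Even (bin_len n) /\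
  forall j : nat, j < bin_len n ->
    Nat.b2n (Nat.testbit n j) + Nat.b2n (Nat.testbit n (bin_len n - 1 - j)) = 1.

Definition antipal_quotient (N : nat) : Prop :=
  exists A B : nat, antipalindromic A /\ antipalindromic B /\ A = N * B.

(* Main.v *)
Require Import Defs.
From Stdlib Require Import Arith Reals List.
From Stdlib Require Import Lia Lra.
Import ListNotations.

Fixpoint val (l : list bool) : nat :=
  match l with [] => 0 | b :: l' => Nat.b2n b + 2 * val l' end.
Definition nrev (l : list bool) := map negb (rev l).

Lemma val_app x y : val (x ++ y) = val x + 2 ^ length x * val y.
Proof. induction x; simpl; [lia|]. rewrite IHx. ring. Qed.

Lemma val_lt l : val l < 2 ^ length l.
Proof. induction l as [|a l IH]; simpl; [lia|]. destruct a; simpl; lia. Qed.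

Lemma val_last u : 2 ^ length u <= val (u ++ [true]) < 2 ^ S (length u).
Proof. rewrite val_app. simpl. pose proof (val_lt u). lia. Qed.

Lemma log2_last u : Nat.log2 (val (u ++ [true])) = length u.
Proof. apply Nat.log2_unique; [lia| apply val_last]. Qed.

Lemma testbit_val l j : Nat.testbit (val l) j = nth j l false.
Proof.
  induction l as [|a l IHl] in j |- *.
  - simpl. destruct j; [reflexivity| apply Nat.bits_0].
  - change (val (a :: l)) with (Nat.b2n a + 2 * val l).
    destruct a; simpl Nat.b2n;
    [replace (1 + 2*val l) with (2*val l + 1) by lia
    | replace (0 + 2*val l) with (2*val l) by lia]; destruct j.
    + apply Nat.testbit_odd_0.
    + rewrite Nat.testbit_odd_succ by lia; apply IHl.
    + apply Nat.testbit_even_0.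
    + rewrite Nat.testbit_even_succ by lia; apply IHl.
Qed.

Lemma val_inj x y : length x = length y -> val x = val y -> x = y.
Proof.
  induction x as [|a x IH] in y |- *; destruct y as [|b y]; simpl; intros H1 H2;
    try reflexivity; try lia.
  assert (a = b) by (destruct a, b; simpl in *; try reflexivity; lia). subst.
  f_equal. apply IH; [lia| destruct b; simpl in *; lia].
Qed.

Lemma app_len_inj {A} (x y z t : list A) :
  length x = length y -> x ++ z = y ++ t -> x = y /\ z = t.
Proof.
  induction x as [|a x IH] in y |- *; destruct y as [|b y]; simpl; intros H1 H2;
    try lia; auto.
  injection H2 as -> H2. destruct (IH y) as [-> ->]; auto.
Qed.

Lemma nrev_app x y : nrev (x ++ y) = nrev y ++ nrev x.
Proof. unfold nrev; rewrite rev_app_distr, map_app; reflexivity. Qed.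
Lemma nrev_length x : length (nrev x) = length x.
Proof. unfold nrev; rewrite length_map, length_rev; reflexivity. Qed.

Lemma nth_w l j : j < length l ->
  nth (2*length l - 1 - j) (l ++ nrev l) false = negb (nth j l false).
Proof.
  intros Hj. rewrite app_nth2 by lia. unfold nrev.
  rewrite nth_indep with (d' := negb true) by (rewrite length_map, length_rev; lia).
  rewrite map_nth. rewrite rev_nth by lia. f_equal.
  replace (length l - S (2 * length l - 1 - j - length l)) with j by lia.
  apply nth_indep; lia.
Qed.

Lemma wform l' : (false :: l') ++ nrev (false :: l') = false :: ((l' ++ nrev l') ++ [true]).
Proof. unfold nrev; simpl; rewrite map_app, <- app_assoc; reflexivity. Qed.

Lemma antipal_w l' : antipalindromic (val ((false :: l') ++ nrev (false :: l'))).
Proof.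
  set (l := false :: l').
  assert (Hw : l ++ nrev l = (false :: l' ++ nrev l') ++ [true]).
  { unfold l; rewrite wform; reflexivity. }
  assert (HL : bin_len (val (l ++ nrev l)) = 2 * length l).
  { unfold bin_len; rewrite Hw, log2_last; simpl; rewrite length_app, nrev_length;
    unfold l; simpl; lia. }
  split; [|split].
  - rewrite Hw. pose proof (val_last (false :: l' ++ nrev l')).
    pose proof (Nat.pow_nonzero 2 (length (false :: l' ++ nrev l'))). lia.
  - rewrite HL; exists (length l); lia.
  - intros j Hj. rewrite HL in *. rewrite !testbit_val.
    destruct (Nat.lt_ge_cases j (length l)) as [H|H].
    + rewrite nth_w by lia. rewrite app_nth1 by lia.
      destruct (nth j l false); reflexivity.
    + assert (Hj2: j = 2*length l - 1 - (2*length l - 1 - j)) by lia.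
      rewrite Hj2 at 1. rewrite nth_w by lia. rewrite app_nth1 by lia.
      destruct (nth (2 * length l - 1 - j) l false); reflexivity.
Qed.

Fixpoint allb n : list (list bool) :=
  match n with 0 => [[]] | S n => map (cons false) (allb n) ++ map (cons true) (allb n) end.

Lemma allb_length n : length (allb n) = 2 ^ n.
Proof. induction n; simpl; [reflexivity|]. rewrite length_app, !length_map; lia. Qed.

Lemma allb_in n x : In x (allb n) -> length x = n.
Proof.
  induction n in x |- *; simpl; intros H.
  - destruct H as [<-|[]]; reflexivity.
  - apply in_app_or in H; destruct H as [H|H]; apply in_map_iff in H as [y [<- Hy]];
      simpl; f_equal; auto.
Qed.

Lemma allb_nodup n : NoDup (allb n).
Proof.
  induction n; simpl.
  - constructor; [intros []|constructor].
  - apply NoDup_app.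
    + apply NoDup_map_NoDup_ForallPairs; auto. intros x y _ _ H; injection H; auto.
    + apply NoDup_map_NoDup_ForallPairs; auto. intros x y _ _ H; injection H; auto.
    + intros a H1 H2. apply in_map_iff in H1 as [y [<- _]].
      apply in_map_iff in H2 as [z [H _]]. discriminate.
Qed.

Lemma build r (g : list bool -> nat) (P : nat -> Prop) :
  (forall f1 f2, length f1 = r -> length f2 = r -> g f1 = g f2 -> f1 = f2) ->
  (forall f, length f = r -> P (g f)) ->
  exists s, NoDup s /\ (forall N, In N s -> P N) /\ length s = 2 ^ r.
Proof.
  intros H1 H2. exists (map g (allb r)). split; [|split].
  - apply NoDup_map_NoDup_ForallPairs; [|apply allb_nodup].
    intros x y Hx Hy. apply H1; eauto using allb_in.
  - intros N HN; apply in_map_iff in HN as [f [<- Hf]]; apply H2, (allb_in r), Hf.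
  - rewrite length_map, allb_length; reflexivity.
Qed.

Lemma odd_case r : exists s, NoDup s /\
  (forall N, In N s -> (2 ^ (2*r) <= N < 2 ^ (2*r+1) /\ antipal_quotient N)) /\
  length s = 2 ^ r.
Proof.
  apply (build r (fun f => val ((f ++ nrev f) ++ [true]))).
  - intros f1 f2 H1 H2 H. apply val_inj in H.
    + rewrite <- !app_assoc in H. apply app_len_inj in H as [H _]; [exact H|lia].
    + rewrite !length_app, !nrev_length; lia.
  - intros f Hf. pose proof (val_last (f ++ nrev f)) as Hb.
    rewrite length_app, nrev_length, Hf in Hb. split.
    + replace (2*r+1) with (S (r+r)) by lia. replace (2*r) with (r+r) by lia. exact Hb.
    + exists (val ((false :: f) ++ nrev (false :: f))), 2. split; [apply antipal_w|].
      split. { change 2 with (val ((false :: []) ++ nrev (false :: []))). apply antipal_w. }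
      rewrite wform. simpl val at 1. lia.
Qed.

Definition adj (x q : nat) : list bool :=
  match find (fun a => (6 + 8*(val a + 16*(x + q*(val (nrev a) + 64)))) mod 5 =? 0) (allb 4)
  with Some a => a | None => [] end.

Lemma adj_spec x q : x < 5 -> (q = 1 \/ q = 4) ->
  length (adj x q) = 4 /\
  (6 + 8*(val (adj x q) + 16*(x + q*(val (nrev (adj x q)) + 64)))) mod 5 = 0.
Proof.
  intros Hx Hq. destruct Hq; subst;
  (do 5 (destruct x as [|x]; [split; vm_compute; reflexivity|])); lia.
Qed.

Lemma pow4_mod r : 4 ^ r mod 5 = 1 \/ 4 ^ r mod 5 = 4.
Proof.
  induction r; [left; reflexivity|].
  rewrite Nat.pow_succ_r', Nat.Div0.mul_mod. destruct IHr as [-> | ->]; [right|left]; reflexivity.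
Qed.

Definition aF (f : list bool) := adj (val (f ++ nrev f) mod 5) (4 ^ length f mod 5).
Definition lF (f : list bool) := false :: true :: true :: aF f ++ f.

Lemma lF_decomp f : lF f ++ nrev (lF f) =
  [false;true;true] ++ aF f ++ (f ++ nrev f) ++ nrev (aF f) ++ [false;false;true].
Proof.
  unfold lF. change (false :: true :: true :: aF f ++ f) with ([false;true;true] ++ aF f ++ f).
  rewrite !nrev_app, !app_assoc. reflexivity.
Qed.

Lemma even_case r : exists s, NoDup s /\
  (forall N, In N s -> (2 ^ (2*r+9) <= N < 2 ^ (2*r+10) /\ antipal_quotient N)) /\
  length s = 2 ^ r.
Proof.
  assert (Hlen : forall f, length f = r -> length (aF f) = 4 /\
     val (lF f ++ nrev (lF f)) mod 5 = 0).
  { intros f Hf. unfold aF.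
    destruct (adj_spec (val (f ++ nrev f) mod 5) (4 ^ length f mod 5)) as [Ha Hm].
    - apply Nat.mod_upper_bound; lia.
    - apply pow4_mod.
    - split; [exact Ha|]. unfold aF in *.
      set (a := adj _ _) in *.
      set (M := val (f ++ nrev f)) in *.
      set (P := 4 ^ length f) in *.
      assert (Hv : val (lF f ++ nrev (lF f)) = 6 + 8*(val a + 16*(M + P*(val (nrev a) + 64)))).
      { rewrite lF_decomp. fold a.
        rewrite (val_app [false;true;true]), (val_app a), (val_app (f ++ nrev f)), (val_app (nrev a)).
        rewrite nrev_length, Ha, length_app, nrev_length.
        replace (2 ^ (length f + length f)) with P
          by (unfold P; rewrite Nat.pow_add_r, <- Nat.pow_mul_l; reflexivity).
        fold M. simpl. ring. }
      rewrite Hv.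
      pose proof (Nat.div_mod M 5 ltac:(lia)) as HM.
      pose proof (Nat.div_mod P 5 ltac:(lia)) as HP.
      set (M' := M mod 5) in *. set (P' := P mod 5) in *.
      set (qM := M / 5) in *. set (qP := P / 5) in *.
      set (na := val (nrev a)) in *.
      replace (6 + 8*(val a + 16*(M + P*(na + 64))))
      with ((6 + 8 * (val a + 16 * (M' + P' * (na + 64)))) + (128 * (qM + qP * (na + 64))) * 5).
      + rewrite Nat.Div0.mod_add. exact Hm.
      + rewrite HM, HP at 1. ring. }
  assert (HE : forall f, length f = r -> length (aF f) = 4 /\
     val (lF f ++ nrev (lF f)) = val (lF f ++ nrev (lF f)) / 10 * 10).
  { intros f Hf. destruct (Hlen f Hf) as [Ha Hm]. split; [exact Ha|].
    set (A := val _) in *.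
    assert (HA : A = 2 * val (tl (lF f ++ nrev (lF f)))) by (unfold A; simpl; lia).
    pose proof (Nat.div_mod A 5 ltac:(lia)). pose proof (Nat.div_mod A 10 ltac:(lia)).
    pose proof (Nat.mod_upper_bound A 10 ltac:(lia)). lia. }
  assert (HL : forall f, length f = r -> length (lF f) = 7 + r).
  { intros f Hf. destruct (HE f Hf) as [Ha _]. unfold lF. simpl.
    rewrite length_app, Ha, Hf. reflexivity. }
  apply (build r (fun f => val (lF f ++ nrev (lF f)) / 10)).
  - intros f1 f2 H1 H2 H.
    destruct (HE f1 H1) as [Ha1 E1]. destruct (HE f2 H2) as [Ha2 E2].
    assert (Heq : val (lF f1 ++ nrev (lF f1)) = val (lF f2 ++ nrev (lF f2))) by lia.
    apply val_inj in Heq.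
    + apply app_len_inj in Heq as [Heq _]; [|rewrite !HL; auto].
      unfold lF in Heq. injection Heq as Heq.
      apply app_len_inj in Heq as [_ Heq]; [exact Heq|lia].
    + rewrite !length_app, !nrev_length, !HL; auto.
  - intros f Hf. destruct (HE f Hf) as [Ha E].
    set (A := val _) in *. set (N := A / 10) in *.
    assert (HX : A = val (([false;true;true] ++ aF f ++ (f ++ nrev f) ++ nrev (aF f)) ++ [false;false;true])).
    { unfold A. rewrite lF_decomp, !app_assoc. reflexivity. }
    rewrite val_app in HX.
    pose proof (val_lt ([false;true;true] ++ aF f ++ (f ++ nrev f) ++ nrev (aF f))) as Hlt.
    rewrite !length_app, nrev_length, nrev_length, Ha, Hf in HX, Hlt.
    simpl length in HX, Hlt. simpl val in HX at 2.
    replace (3 + (4 + (r + r + 4))) with ((2*r+9) + 2) in HX, Hlt by lia.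
    rewrite Nat.pow_add_r in HX, Hlt.
    replace (2*r+10) with (2*r+9+1) by lia. rewrite (Nat.pow_add_r 2 (2*r+9) 1).
    split; [simpl (2^2) in HX, Hlt; simpl (2^1); lia|].
    exists A, 10. split; [unfold A, lF; apply antipal_w|]. split; [|exact E].
    change 10 with (val ((false :: [true]) ++ nrev (false :: [true]))). apply antipal_w.
Qed.

Open Scope R_scope.

Lemma sqrt2_pow_even k : sqrt 2 ^ (2 * k) = 2 ^ k.
Proof. rewrite pow_mult, pow2_sqrt by lra. reflexivity. Qed.

Theorem theorem15 :
  exists c : R, 0 < c /\
  exists i0 : nat, forall i : nat, (i0 <= i)%nat ->
    exists s : list nat,
      NoDup s /\
      (forall N : nat, In N s ->
         (2 ^ (i - 1) <= N < 2 ^ i)%nat /\ antipal_quotient N) /\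
      c * (sqrt 2) ^ i <= INR (length s).
Proof.
  exists (1/64). split; [lra|]. exists 10%nat. intros i Hi.
  assert (H2 : INR 2 = 2) by (simpl; lra).
  destruct (Nat.Even_or_Odd i) as [[k Hk]|[k Hk]].
  - destruct (even_case (k-5)) as [s [Hs1 [Hs2 Hs3]]]. exists s. split; [exact Hs1|].
    assert (Hi1 : (i - 1 = 2*(k-5)+9)%nat) by lia.
    assert (Hi2 : i = (2*(k-5)+10)%nat) by lia.
    split.
    + intros N HN. rewrite Hi1. rewrite Hi2. apply Hs2, HN.
    + rewrite Hs3, pow_INR, H2.
      replace i with (2 * ((k-5)+5))%nat by lia. rewrite sqrt2_pow_even, pow_add.
      pose proof (pow_le 2 (k-5) ltac:(lra)). simpl (2^5). lra.
  - destruct (odd_case k) as [s [Hs1 [Hs2 Hs3]]]. exists s. split; [exact Hs1|].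
    assert (Hi1 : (i - 1 = 2*k)%nat) by lia.
    split.
    + intros N HN. rewrite Hi1. rewrite Hk. apply Hs2, HN.
    + rewrite Hs3, pow_INR, H2, Hk, pow_add, sqrt2_pow_even.
      pose proof (pow_le 2 k ltac:(lra)).
      pose proof (sqrt_pos 2). pose proof (pow2_sqrt 2 ltac:(lra)).
      assert (sqrt 2 <= 2) by nra. simpl (sqrt 2 ^ 1). nra.
Qed.
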